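(* Let $\mathcal{R}$ be a field and $(\mathcal{C}^{\bullet},\partial)$ a bigraded cochain complex of $\mathcal{R}$-vector spaces as in the context. Then there are vector space isomorphisms \[ B^{2}(\mathcal{C},\partial)\cong(B^{2}(\mathcal{C},\partial)\cap\mathcal{C}^{2,0})\oplus(\mathcal{B}^{2}_{1}\cap\mathcal{C}^{1,1})\oplus B^{2}(\mathcal{C}^{0,\bullet},\partial_{0,1}), \] \[ Z^{2}(\mathcal{C},\partial)\cong Z^{2}(\mathcal{N}_{0},\overline{\partial})\oplus\ker(\varrho_{2})\oplus\mathcal{Z}^{2}_{2}, \] \[ H^{2}(\mathcal{C},\partial)\cong\frac{Z^{2}(\mathcal{N}_{0},\overline{\partial})}{B^{2}(\mathcal{C},\partial)\cap\mathcal{C}^{2,0}}\oplus\frac{\ker(\varrho_{2})}{\mathcal{B}^{2}_{1}\cap\mathcal{C}^{1,1}}\oplus\frac{\mathcal{Z}^{2}_{2}}{B^{2}(\mathcal{C}^{0,\bullet},\partial_{0,1})}. \]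
   Context: Setting: $\mathcal{C}^{k}=\bigoplus_{p+q=k}\mathcal{C}^{p,q}$ with $\mathcal{C}^{p,q}=\{0\}$ if $p<0$ or $q<0$; $\partial$ is linear of degree $1$, $\partial^{2}=0$, $\partial=\partial_{2,-1}+\partial_{1,0}+\partial_{0,1}$ with $\partial_{i,j}(\mathcal{C}^{p,q})\subseteq\mathcal{C}^{p+i,q+j}$. For $\eta\in\mathcal{C}^k$, $\eta_{p,q}$ is its $\mathcal{C}^{p,q}$-component. $G^{q}\mathcal{C}:=\bigoplus_{j\geq q}\mathcal{C}^{i,j}$, $\pi_{q}:\mathcal{C}\to G^{q}\mathcal{C}$ the projection along the bigrading. $(\mathcal{C}^{0,\bullet},\partial_{0,1})$ is a cochain complex. $\mathcal{N}^{p,q}:=\ker(\partial_{0,1}|_{\mathcal{C}^{p,q}})\cap\ker(\partial_{2,-1}|_{\mathcal{C}^{p,q}})$, $\mathcal{N}_{q}:=\bigoplus_{p}\mathcal{N}^{p-q,q}$ (degree-$m$ part $\mathcal{N}^{m-q,q}$), a subcomplex with differential $\overline{\partial}:=\partial|_{\mathcal{N}_q}$. $\mathcal{M}^{k}:=\{\eta\in\mathcal{C}^{k}\mid(\partial\eta)_{i,j}\in B^{k+1}(\mathcal{N}_{j},\overline{\partial})\ \forall\, i+j=k+1\}$; $\mathcal{Z}^{k}_{q}:=\{\pi_{q}(\eta)\mid\eta\in\mathcal{M}^{k},\ \pi_{q}(\partial\eta)=0\}$; $\mathcal{B}^{k}_{q}:=\pi_{q}(B^{k}(\mathcal{C},\partial))$.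 $\mathcal{A}^{k}:=\{\pi_{1}(\eta)\mid\eta\in\mathcal{C}^{k},\ \pi_{1}(\partial\eta)=0\}$, $\mathcal{J}^{k}:=\mathcal{A}^{k}\cap\mathcal{C}^{k-1,1}$. For $\xi\in\mathcal{A}^{k}$ and any $\eta$ with $\pi_{1}\eta=\xi$, $\pi_{1}(\partial\eta)=0$, the class $[\partial_{2,-1}\xi_{k-1,1}+\partial_{1,0}\eta_{k,0}]\in H^{k+1}(\mathcal{N}_{0},\overline\partial)$ depends only on $\xi$, defining the linear map $\rho_{k}:\mathcal{A}^{k}\to H^{k+1}(\mathcal{N}_{0},\overline{\partial})$; $\varrho_{k}:=\rho_{k}|_{\mathcal{J}^{k}}$. *)

(* Defs.v *)
From HB Require Import structures.
From mathcomp Require Import all_boot all_order all_algebra.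
Set Implicit Arguments. Unset Strict Implicit. Unset Printing Implicit Defensive.
Import GRing.Theory.
Local Open Scope ring_scope.

(* C k (= bC k) is the total space C^k.  The bigrading C^k = (+)_{p+q=k} C^{p,q}
   is given as an internal direct sum by the projections bpr k p : C^k -> C^k onto
   C^{p,k-p} (zero for p > k, i.e. when q < 0). *)
Record bicomplex (R : fieldType) := Bicomplex {
  bC : nat -> lmodType R;
  bpr : forall k : nat, nat -> {linear bC k -> bC k};
  bd21 : forall k : nat, {linear bC k -> bC k.+1};
  bd10 : forall k : nat, {linear bC k -> bC k.+1};
  bd01 : forall k : nat, {linear bC k -> bC k.+1};
  bpr_out : forall k p (x : bC k), (k < p)%N -> bpr k p x = 0;
  bpr_orth : forall k p p' (x : bC k),
      bpr k p (bpr k p' x) = if p == p' then bpr k p' x else 0;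
  bpr_sum : forall k (x : bC k), \sum_(p < k.+1) bpr k p x = x;
  bd21_deg : forall k p (x : bC k),
      bpr k.+1 p.+2 (bd21 k (bpr k p x)) = bd21 k (bpr k p x);
  bd10_deg : forall k p (x : bC k),
      bpr k.+1 p.+1 (bd10 k (bpr k p x)) = bd10 k (bpr k p x);
  bd01_deg : forall k p (x : bC k),
      bpr k.+1 p (bd01 k (bpr k p x)) = bd01 k (bpr k p x);
  bdd : forall k (x : bC k),
      let d := fun m (y : bC m) => bd21 m y + bd10 m y + bd01 m y in
      d k.+1 (d k x) = 0
}.

Section Defs.
Variables (R : fieldType) (X : bicomplex R).
Local Notation C := (bC X).
Local Notation pr := (bpr X).

Definition dtot k (x : C k) : C k.+1 := bd21 X k x + bd10 X k x + bd01 X k x.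

(* x lies in C^{p,k-p} *)
Definition inC k p (x : C k) : Prop := pr k p x = x.

Definition Zc k (x : C k) : Prop := dtot x = 0.
Definition Bc k (x : C k.+1) : Prop := exists y : C k, dtot y = x.

(* pi_q : C^k -> G^q C^k, keeping the components C^{p,k-p} with k - p >= q *)
Definition piq k q (x : C k) : C k := \sum_(p < k.+1 | (q + p <= k)%N) pr k p x.

Definition calB k q (x : C k.+1) : Prop := exists y : C k, x = piq q (dtot y).

Definition Nin k p (x : C k) : Prop :=
  [/\ inC p x, bd01 X k x = 0 & bd21 X k x = 0].
(* degree-m part of N_q, namely N^{m-q,q} (zero if q > m) *)
Definition NqIn q m (x : C m) : Prop :=
  if (q <= m)%N then Nin (m - q) x else x = 0.
Definition BN j k (x : C k.+1) : Prop := exists y : C k, NqIn j y /\ dtot y = x.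
Definition ZN0 k (x : C k) : Prop := NqIn 0 x /\ dtot x = 0.

Definition B0 k (x : C k.+1) : Prop := exists y : C k, inC 0 y /\ bd01 X k y = x.

Definition Min k (eta : C k) : Prop :=
  forall i : nat, (i <= k.+1)%N -> BN (k.+1 - i) (pr k.+1 i (dtot eta)).
Definition calZ k q (x : C k) : Prop :=
  exists eta : C k, [/\ Min eta, piq q (dtot eta) = 0 & x = piq q eta].
Definition calA k (x : C k) : Prop :=
  exists eta : C k, piq 1 (dtot eta) = 0 /\ x = piq 1 eta.
Definition calJ k (x : C k) : Prop := [/\ (1 <= k)%N, calA x & inC (k - 1) x].

(* representative d21 xi_{k-1,1} + d10 eta_{k,0} of rho_k(xi) in H^{k+1}(N_0) *)
Definition rho_rep k (xi eta : C k) : C k.+1 :=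
  bd21 X k (pr k (k - 1) xi) + bd10 X k (pr k k eta).
(* ker(varrho_k): xi in J^k whose class rho_k(xi) vanishes, i.e. the
   representative (computed from any admissible eta) lies in B^{k+1}(N_0) *)
Definition ker_rho k (xi : C k) : Prop :=
  calJ xi /\ exists eta : C k,
    [/\ piq 1 eta = xi, piq 1 (dtot eta) = 0 & BN 0 (rho_rep xi eta)].

End Defs.

Definition zerop (R : fieldType) (V : lmodType R) (x : V) : Prop := x = 0.

Definition lin_on (R : fieldType) (V W : lmodType R) (Z : V -> Prop) (f : V -> W) :=
  forall (a : R) (x y : V), Z x -> Z y -> f (a *: x + y) = a *: f x + f y.

(* Vector space isomorphism  Z/B  ~=  Z1/B1 (+) Z2/B2 (+) Z3/B3  for subquotients
   (Z, B subspaces, B inside Z) of ambient spaces V, V1, V2, V3: there are maps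
   f_i, linear on Z, sending Z into Z_i and B into B_i, such that the induced
   linear map Z/B -> (+)_i Z_i/B_i is injective and surjective. Subspaces are
   the subquotients with B = zerop. *)
Definition subq_iso3 (R : fieldType) (V : lmodType R) (Z B : V -> Prop)
    (V1 V2 V3 : lmodType R) (Z1 B1 : V1 -> Prop) (Z2 B2 : V2 -> Prop)
    (Z3 B3 : V3 -> Prop) : Prop :=
  exists (f1 : V -> V1) (f2 : V -> V2) (f3 : V -> V3),
    [/\ lin_on Z f1 /\ lin_on Z f2 /\ lin_on Z f3,
        (forall z, Z z -> [/\ Z1 (f1 z), Z2 (f2 z) & Z3 (f3 z)]),
        (forall b, B b -> [/\ B1 (f1 b), B2 (f2 b) & B3 (f3 b)]),
        (forall z, Z z -> B1 (f1 z) -> B2 (f2 z) -> B3 (f3 z) -> B z) &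
        (forall z1 z2 z3, Z1 z1 -> Z2 z2 -> Z3 z3 ->
           exists z, [/\ Z z, B1 (f1 z - z1), B2 (f2 z - z2) & B3 (f3 z - z3)])].

(* Main.v *)
Require Import Defs.
From mathcomp Require Import all_boot all_order all_algebra.
From mathcomp Require Import classical_sets.
From Stdlib Require Import Classical ClassicalEpsilon.
Local Open Scope ring_scope.

Module Helpers.
Set Implicit Arguments. Unset Strict Implicit. Unset Printing Implicit Defensive.
Import GRing.Theory.
Local Open Scope ring_scope.

Section Abstract.
Variables (R : fieldType) (V : lmodType R).

Definition subsp (S : V -> Prop) := S 0 /\ forall (a : R) x y, S x -> S y -> S (a *: x + y).

Lemma subspD S : subsp S -> forall x y, S x -> S y -> S (x + y).
Proof. by move=> [_ H] x y Sx Sy; have := H 1 x y Sx Sy; rewrite scale1r. Qed.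
Lemma subspZ S : subsp S -> forall a x, S x -> S (a *: x).
Proof. by move=> [H0 H] a x Sx; have := H a x 0 Sx H0; rewrite addr0. Qed.
Lemma subspN S : subsp S -> forall x, S x -> S (- x).
Proof. by move=> hS x Sx; rewrite -scaleN1r; apply: subspZ. Qed.
Lemma subspB S : subsp S -> forall x y, S x -> S y -> S (x - y).
Proof. by move=> hS x y Sx Sy; apply: subspD => //; apply: subspN. Qed.

Lemma complement_ext (U S L0 : V -> Prop) : subsp U -> subsp S -> subsp L0 ->
  (forall x, L0 x -> S x) -> (forall x, L0 x -> U x -> x = 0) ->
  exists L, [/\ subsp L, forall x, L0 x -> L x, forall x, L x -> S x,
     forall x, L x -> U x -> x = 0 &
     forall s, S s -> exists u l, [/\ U u, L l & s = u + l]].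
Proof.
move=> hU hS hL0 L0S L0U.
pose P (A : set V) := [/\ forall x, A x -> S x, forall x, A x -> U x -> x = 0,
   forall a x y, A x -> A y -> A (a *: x + y) & (exists x, A x) -> forall x, L0 x -> A x].
have [|A [[AS AU Acl AL0] Amax]] := @Zorn_bigcup V P.
  move=> F FP Ftot; split.
  - by move=> x [X FX Xx]; have [+ _ _ _] := FP X FX; apply.
  - by move=> x [X FX Xx]; have [_ + _ _] := FP X FX; apply.
  - move=> a x y [X FX Xx] [Y FY Yy].
    have [XY|YX] := Ftot X Y FX FY.
    + exists Y => //; have [_ _ + _] := FP Y FY; apply => //; exact: XY.
    + exists X => //; have [_ _ + _] := FP X FX; apply => //; exact: YX.
  - move=> [x [X FX Xx]] z L0z; exists X => //.
    by have [_ _ _ +] := FP X FX; apply => //; exists x.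
have A0 : exists x, A x.
  apply: NNPP => nA.
  have PL0 : P L0.
    split.
    - exact: L0S.
    - exact: L0U.
    - by move=> a x y Lx Ly; apply: hL0.2.
    - by move=> _ x Lx.
  suff : proper A L0 by move=> /Amax; apply.
  split; first by move=> x Ax; exfalso; apply: nA; exists x.
  by move=> H; apply: nA; exists 0; apply: H; case: hL0.
have hA : subsp A.
  split => //; case: A0 => x Ax; have := Acl (-1) x x Ax Ax.
  by rewrite scaleN1r addNr.
exists A; split => //; first by apply: AL0.
move=> s Ss; apply: NNPP => ns.
pose A' (v : V) := exists a c, A a /\ v = a + c *: s.
apply: (Amax A'); last first.
  split.
  - move=> v [a [c [Aa ->]]]; apply: subspD => //; first exact: AS.
    exact: subspZ.
  - move=> v [a [c [Aa ->]]] Uv.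
    have [c0|cn0] := eqVneq c 0.
      by move: Uv; rewrite c0 scale0r addr0 => Ua; rewrite (AU a Aa Ua).
    exfalso; apply: ns; exists (c^-1 *: (a + c *: s)), (- (c^-1 *: a)); split.
    + exact: subspZ.
    + by apply: subspN => //; apply: subspZ.
    + by rewrite scalerDr scalerA mulVf // scale1r addrAC addrN add0r.
  - move=> k v w [a [c [Aa ->]]] [b [e [Ab ->]]].
    exists (k *: a + b), (k * c + e); split; first exact: Acl.
    by rewrite scalerDr scalerA addrACA scalerDl.
  - by move=> _ x L0x; exists x, 0; split; [exact: AL0 | rewrite scale0r addr0].
split.
  by move=> v Av; exists v, 0; split => //; rewrite scale0r addr0.
move=> A'A; apply: ns.
have As : A s.
  by apply: A'A; exists 0, 1; split; [case: hA | rewrite add0r scale1r].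
by exists 0, s; split => //; [case: hU | rewrite add0r].
Qed.


Lemma proj_exists (W U B : V -> Prop) : subsp W -> subsp U -> subsp B ->
  (forall x, U x -> W x) -> (forall x, B x -> W x) ->
  exists P : V -> V, [/\ lin_on W P, forall w, W w -> U (P w),
     forall u, U u -> P u = u & forall b, B b -> B (P b)].
Proof.
move=> hW hU hB UW BW.
have hz : subsp (fun x : V => x = 0).
  by split => // a x y -> ->; rewrite scaler0 addr0.
have [L1 [hL1 _ L1B L1U decB]] := @complement_ext U B (fun x => x = 0) hU hB hz
   (fun x (e : x = 0) => ltac:(rewrite e; case: hB => //))
   (fun x e _ => e).
have [L [hL L1L LW LU decW]] := @complement_ext U W L1 hU hW hL1
   (fun x Lx => BW x (L1B x Lx)) L1U.
pose spec w u := U u /\ L (w - u).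
pose P w := epsilon (inhabits (0 : V)) (spec w).
have uniq w u1 u2 : spec w u1 -> spec w u2 -> u1 = u2.
  move=> [U1 L1'] [U2 L2'].
  have e : (w - u2) - (w - u1) = u1 - u2 by rewrite opprB addrC addrA subrK.
  apply/eqP; rewrite -subr_eq0; apply/eqP; apply: LU.
    by rewrite -e; apply: subspB.
  exact: subspB.
have ex w : W w -> spec w (P w).
  move=> Ww; apply: epsilon_spec.
  have [u [l [Uu Ll ->]]] := decW w Ww.
  by exists u; split => //; rewrite addrC addKr.
exists P; split.
- move=> a x y Wx Wy; apply: (uniq (a *: x + y)); first exact: ex (hW.2 _ _ _ Wx Wy).
  have [Ux Lx] := ex x Wx; have [Uy Ly] := ex y Wy.
  split; first exact: hU.2.
  have -> : a *: x + y - (a *: P x + P y) = a *: (x - P x) + (y - P y).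
    by rewrite scalerDr scalerN opprD addrACA.
  exact: hL.2.
- by move=> w Ww; case: (ex w Ww).
- move=> u Uu; apply: (uniq u); first exact: ex (UW u Uu).
  by split => //; rewrite subrr; case: hL.
- move=> b Bb; have [u [l [Uu Ll e]]] := decB b Bb.
  have -> : P b = u.
    apply: (uniq b); first exact: ex (BW b Bb).
    by split => //; rewrite e addrC addKr; apply: L1L.
  have -> : u = b - l by rewrite e addrK.
  by apply: subspB => //; apply: L1B.
Qed.

End Abstract.

Definition glin (R : fieldType) (V W : lmodType R) (g : V -> W) :=
  forall a x y, g (a *: x + y) = a *: g x + g y.

Lemma glin0 (R : fieldType) (V W : lmodType R) (g : V -> W) : glin g -> g 0 = 0.
Proof.
move=> h; have e := h 1 0 0; rewrite !scale1r addr0 in e.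
by apply: (@addrI _ (g 0)); rewrite addr0 -e.
Qed.
Lemma glinB (R : fieldType) (V W : lmodType R) (g : V -> W) : glin g -> forall x y, g (x - y) = g x - g y.
Proof. by move=> h x y; have := h (-1) y x; rewrite !scaleN1r => e; rewrite addrC e addrC. Qed.
Lemma glinD (R : fieldType) (V W : lmodType R) (g : V -> W) : glin g -> forall x y, g (x + y) = g x + g y.
Proof. by move=> h x y; have := h 1 x y; rewrite !scale1r. Qed.

Lemma linonB (R : fieldType) (V W : lmodType R) (Z : V -> Prop) (g : V -> W) : lin_on Z g ->
  forall x y, Z x -> Z y -> g (x - y) = g x - g y.
Proof.
by move=> h x y Zx Zy; have := h (-1) y x Zy Zx; rewrite !scaleN1r => e; rewrite addrC e addrC.
Qed.
Lemma linonD (R : fieldType) (V W : lmodType R) (Z : V -> Prop) (g : V -> W) : lin_on Z g ->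
  forall x y, Z x -> Z y -> g (x + y) = g x + g y.
Proof. by move=> h x y Zx Zy; have := h 1 x y Zx Zy; rewrite !scale1r. Qed.

Lemma abstract_iso (R : fieldType) (V V1 V2 V3 : lmodType R) (Z B : V -> Prop)
  (Z1 B1 : V1 -> Prop) (Z2 B2 : V2 -> Prop) (Z3 B3 : V3 -> Prop)
  (g1 : V -> V1) (g2 : V -> V2) (g3 : V -> V3) :
  subsp Z -> subsp B -> (forall x, B x -> Z x) -> subsp B1 -> subsp B2 -> subsp B3 ->
  glin g1 -> glin g2 -> glin g3 ->
  (forall z, Z z -> Z3 (g3 z)) -> (forall b, B b -> B3 (g3 b)) ->
  (forall z3, Z3 z3 -> exists z, Z z /\ g3 z = z3) ->
  (forall z, Z z -> B3 (g3 z) -> exists b, B b /\ g3 b = g3 z) ->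
  (forall k, Z k -> g3 k = 0 -> Z2 (g2 k)) -> (forall b, B b -> g3 b = 0 -> B2 (g2 b)) ->
  (forall z2, Z2 z2 -> exists k, [/\ Z k, g3 k = 0 & g2 k = z2]) ->
  (forall k, Z k -> g3 k = 0 -> B2 (g2 k) -> exists b, [/\ B b, g3 b = 0 & g2 b = g2 k]) ->
  (forall k, Z k -> g3 k = 0 -> g2 k = 0 -> Z1 (g1 k)) ->
  (forall b, B b -> g3 b = 0 -> g2 b = 0 -> B1 (g1 b)) ->
  (forall z1, Z1 z1 -> exists k, [/\ Z k, g3 k = 0, g2 k = 0 & g1 k = z1]) ->
  (forall k, Z k -> g3 k = 0 -> g2 k = 0 -> B1 (g1 k) -> B k) ->
  subq_iso3 Z B Z1 B1 Z2 B2 Z3 B3.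
Proof.
move=> hZ hB BZ hB1 hB2 hB3 l1 l2 l3 h3a h3b h3c h3d h2a h2b h2c h2d h1a h1b h1c h1d.
pose K x := Z x /\ g3 x = 0.
pose K' x := K x /\ g2 x = 0.
have hK : subsp K.
  split; first by split; [case: hZ | exact: glin0].
  by move=> a x y [Zx gx] [Zy gy]; split; [exact: hZ.2 | rewrite l3 gx gy scaler0 addr0].
have hK' : subsp K'.
  split; first by split; [case: hK | exact: glin0].
  by move=> a x y [Kx gx] [Ky gy]; split; [exact: hK.2 | rewrite l2 gx gy scaler0 addr0].
have hBK : subsp (fun x => B x /\ K x).
  split; first by split; [case: hB | case: hK].
  by move=> a x y [Bx Kx] [By Ky]; split; [exact: hB.2 | exact: hK.2].
have [P [Plin PK Pid PB]] := @proj_exists R V Z K B hZ hK hB (fun x Kx => Kx.1) BZ.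
have [P' [P'lin P'K' P'id P'B]] := @proj_exists R V K K' (fun x => B x /\ K x) hK hK' hBK
   (fun x Kx => Kx.1) (fun x Bx => Bx.2).
exists (fun z => g1 (P' (P z))), (fun z => g2 (P z)), g3; split.
- split; last split.
  + move=> a x y Zx Zy /=; rewrite Plin // P'lin; [by rewrite l1 | exact: PK | exact: PK].
  + by move=> a x y Zx Zy /=; rewrite Plin // l2.
  + by move=> a x y Zx Zy /=; rewrite l3.
- move=> z Zz; split.
  + by have := P'K' _ (PK _ Zz) => -[[Zk g3k] g2k]; apply: h1a.
  + by have := PK _ Zz => -[Zk g3k]; apply: h2a.
  + exact: h3a.
- move=> b Bb; split.
  + have BKPb : B (P b) /\ K (P b) by split; [exact: PB | exact: PK (BZ _ Bb)].
    have [Bc Kc] := P'B _ BKPb.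
    have [[_ g3c] g2c] := P'K' _ BKPb.2.
    exact: h1b.
  + have [_ g3c] := PK _ (BZ _ Bb); exact: h2b (PB _ Bb) g3c.
  + exact: h3b.
- move=> z Zz B1z B2z B3z.
  have [b [Bb gb]] := h3d z Zz B3z.
  have Zb := BZ _ Bb.
  have Kzb : K (z - b) by split; [exact: subspB | rewrite (glinB l3) gb subrr].
  have ePz : P z = (z - b) + P b by rewrite -(Pid _ Kzb) (linonB Plin) ?subrK.
  have [BPb KPb] : B (P b) /\ K (P b) by split; [exact: PB | exact: PK].
  have B2zb : B2 (g2 (z - b)).
    have -> : z - b = P z - P b by rewrite ePz addrK.
    by rewrite (glinB l2); apply: (subspB hB2) => //; exact: h2b KPb.2.
  have [b' [Bb' g3b' g2b']] := h2d _ Kzb.1 Kzb.2 B2zb.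
  have Kb' : K b' by split => //; exact: BZ.
  pose v := z - b - b'.
  have K'v : K' v.
    split; first exact: subspB.
    by rewrite /v (glinB l2) g2b' subrr.
  have eP'z : P' (P z) = v + P' b' + P' (P b).
    rewrite ePz (_ : z - b = v + b'); last by rewrite /v subrK.
    have Kv : K v := K'v.1.
    have Kvb : K (v + b') by apply: subspD.
    by rewrite (linonD P'lin Kvb KPb) (linonD P'lin Kv Kb') (P'id _ K'v).
  have B1v : B1 (g1 v).
    have -> : v = P' (P z) - P' (P b) - P' b' by rewrite eP'z addrK addrK.
    have [Bc1 Kc1] := P'B b' (conj Bb' Kb').
    have [Bc2 Kc2] := P'B (P b) (conj BPb KPb).
    have [[_ g3c1] g2c1] := P'K' _ Kb'.
    have [[_ g3c2] g2c2] := P'K' _ KPb.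
    rewrite !(glinB l1); apply: (subspB hB1); first apply: (subspB hB1).
    + exact: B1z.
    + exact: h1b Bc2 g3c2 g2c2.
    + exact: h1b Bc1 g3c1 g2c1.
  have Bv := h1d v K'v.1.1 K'v.1.2 K'v.2 B1v.
  have -> : z = v + b' + b by rewrite /v !subrK.
  by apply: subspD => //; apply: subspD.
- move=> z1 z2 z3 Z1z Z2z Z3z.
  have [a [Za ga]] := h3c z3 Z3z.
  have [k [Zk g3k g2k]] := h2c z2 Z2z.
  have [c [Zc g3c g2c g1c]] := h1c z1 Z1z.
  have Kk : K k by [].
  have K'c : K' c by [].
  have KPa := PK _ Za.
  have K'P'k := P'K' _ Kk.
  pose z := (a - P a) + (k - P' k) + c.
  have Kk' : K (k - P' k) by apply: (subspB hK) => //; case: K'P'k.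
  have Zk' : Z (k - P' k) by case: Kk'.
  have Za' : Z (a - P a) by apply: (subspB hZ) => //; case: KPa.
  have Pz : P z = (k - P' k) + c.
    have Zak : Z (a - P a + (k - P' k)) by apply: (subspD hZ).
    rewrite /z (linonD Plin Zak Zc) (linonD Plin Za' Zk') (linonB Plin Za KPa.1).
    by rewrite (Pid _ KPa) subrr add0r (Pid _ Kk') (Pid _ K'c.1).
  exists z; split.
  + by apply: (subspD hZ) => //; apply: (subspD hZ).
  + rewrite Pz (linonD P'lin Kk' K'c.1) (linonB P'lin Kk K'P'k.1).
    rewrite (P'id _ K'P'k) (P'id _ K'c) subrr add0r g1c subrr; by case: hB1.
  + rewrite Pz (glinD l2) (glinB l2) g2c g2k K'P'k.2.
    by rewrite subr0 addr0 subrr; case: hB2.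
  + rewrite /z (glinD l3 (a - P a + (k - P' k)) c) (glinD l3 (a - P a)) (glinB l3 a) (glinB l3 k) ga g3k g3c KPa.2 K'P'k.1.2.
    by rewrite !subr0 !addr0 subrr; case: hB3.
Qed.

Lemma sum_single (W : zmodType) n (G : nat -> W) (c : nat -> bool) m :
  (forall p, (n < p)%N -> G p = 0) -> (forall p, c p = (p == m)) ->
  \sum_(p < n.+1) (if c p then G p else 0) = G m.
Proof.
move=> G0 hc; have [mn|nm] := leqP m n.
  have mn' : (m < n.+1)%N by [].
  rewrite (bigD1 (Ordinal mn')) //= hc eqxx big1 ?addr0 //.
  move=> i ni; rewrite hc; case: eqP => // e.
  by rewrite -(inj_eq val_inj) /= e eqxx in ni.
rewrite G0 // big1 // => i _; rewrite hc; case: eqP => // e.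
by move: (ltn_ord i); rewrite e ltnS leqNgt nm.
Qed.

Section Bi.
Variables (R : fieldType) (X : bicomplex R).
Local Notation C := (bC X).
Local Notation pr := (bpr X).

Lemma pr_id k p (x : C k) : pr k p (pr k p x) = pr k p x.
Proof. by rewrite bpr_orth eqxx. Qed.
Lemma pr_orth k p p' (x : C k) : p != p' -> pr k p (pr k p' x) = 0.
Proof. by rewrite bpr_orth => /negbTE ->. Qed.

Lemma pr_ext k (x y : C k) : (forall p, (p <= k)%N -> pr k p x = pr k p y) -> x = y.
Proof.
move=> h; rewrite -(bpr_sum x) -(bpr_sum y); apply: eq_bigr => i _.
by apply: h; rewrite -ltnS.
Qed.

Lemma pr_shift k s (D : {linear C k -> C k.+1}) :
  (forall p (x : C k), pr k.+1 (p + s) (D (pr k p x)) = D (pr k p x)) ->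
  forall q (x : C k), pr k.+1 q (D x) = if (s <= q)%N then D (pr k (q - s) x) else 0.
Proof.
move=> hD q x; rewrite -{1}(bpr_sum x) !linear_sum.
under eq_bigr => p _ do rewrite -hD bpr_orth hD.
case: ifP => sq.
  apply: (@sum_single _ k (fun p => D (pr k p x)) (fun p => q == p + s)%N).
    by move=> p kp; rewrite bpr_out // linear0.
  move=> p; apply/eqP/eqP => [->|->]; first by rewrite addnK.
  by rewrite subnK.
rewrite big1 // => p _; case: eqP => // e.
by move: sq; rewrite e leq_addl.
Qed.

Lemma pr_d21 k q (x : C k) :
  pr k.+1 q (bd21 X k x) = if (2 <= q)%N then bd21 X k (pr k (q - 2) x) else 0.
Proof. by apply: pr_shift => p y; rewrite addn2 bd21_deg. Qed.
Lemma pr_d10 k q (x : C k) :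
  pr k.+1 q (bd10 X k x) = if (1 <= q)%N then bd10 X k (pr k (q - 1) x) else 0.
Proof. by apply: pr_shift => p y; rewrite addn1 bd10_deg. Qed.
Lemma pr_d01 k q (x : C k) : pr k.+1 q (bd01 X k x) = bd01 X k (pr k q x).
Proof.
by rewrite (@pr_shift k 0) ?subn0 // => p y; rewrite addn0 bd01_deg.
Qed.

Lemma dtotE k (x : C k) : dtot x = (bd21 X k \+ bd10 X k \+ bd01 X k) x.
Proof. by []. Qed.
Lemma dtotP k a (x y : C k) : dtot (a *: x + y) = a *: dtot x + dtot y.
Proof. by rewrite !dtotE linearP. Qed.
Lemma dtotB k (x y : C k) : dtot (x - y) = dtot x - dtot y.
Proof. by rewrite !dtotE linearB. Qed.
Lemma dtot0 k : dtot (0 : C k) = 0.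
Proof. by rewrite !dtotE linear0. Qed.

Lemma pr_dtot k q (x : C k) : pr k.+1 q (dtot x) =
  (if (2 <= q)%N then bd21 X k (pr k (q - 2) x) else 0) +
  (if (1 <= q)%N then bd10 X k (pr k (q - 1) x) else 0) + bd01 X k (pr k q x).
Proof. by rewrite /dtot !linearD pr_d21 pr_d10 pr_d01. Qed.

Lemma pr_piq k q p (x : C k) : pr k p (piq q x) = if (q + p <= k)%N then pr k p x else 0.
Proof.
rewrite /piq big_mkcond linear_sum /=.
under eq_bigr => i _ do rewrite (fun_if (pr k p)) linear0 bpr_orth.
transitivity (\sum_(i < k.+1) (if (i : nat) == p then
   (fun i : nat => if (q + i <= k)%N then pr k i x else 0) i else 0)).
  by apply: eq_bigr => i _; rewrite (eq_sym p); case: (q + i <= k)%N; case: eqP.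
apply: (@sum_single _ k (fun i : nat => if (q + i <= k)%N then pr k i x else 0) (fun i => i == p)) => // i ki.
by rewrite bpr_out //; case: ifP.
Qed.


Lemma piqP k q a (x y : C k) : piq q (a *: x + y) = a *: piq q x + piq q y.
Proof.
apply: pr_ext => p _; rewrite !linearP !pr_piq linearP.
by case: ifP => //; rewrite scaler0 addr0.
Qed.
Lemma piq0 k q : piq q (0 : C k) = 0.
Proof. by apply: pr_ext => p _; rewrite pr_piq !linear0; case: ifP. Qed.

Lemma inC_orth k p p' (x : C k) : inC p' x -> p != p' -> pr k p x = 0.
Proof. by move=> <- /pr_orth ->. Qed.

Lemma F1 (b : C 2) : Bc b -> B0 (pr 2 0 b).
Proof.
move=> [y <-]; exists (pr 1 0 y); split; first exact: pr_id.
by rewrite pr_dtot /= !add0r.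
Qed.

Lemma F2 (z : C 2) : B0 z -> exists b, Bc b /\ pr 2 0 b = z.
Proof.
move=> [y [y0 <-]]; exists (dtot y); split; first by exists y.
by rewrite pr_dtot /= !add0r y0.
Qed.

Lemma F3 (b : C 2) : Bc b -> pr 2 0 b = 0 -> calB 1 (pr 2 1 b) /\ inC 1 (pr 2 1 b).
Proof.
move=> [y <-] h0; split; last exact: pr_id.
exists y; apply: pr_ext => p; rewrite pr_piq.
case: p => [|[|[|//]]] _ /=.
- by rewrite pr_orth.
- by rewrite pr_id.
- by rewrite pr_orth.
Qed.

Lemma F4 (z : C 2) : calB 1 z /\ inC 1 z -> exists b, [/\ Bc b, pr 2 0 b = 0 & pr 2 1 b = z].
Proof.
move=> [[y ez] iz]; exists (dtot y); split; first by exists y.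
- have := f_equal (pr 2 0) ez; rewrite pr_piq /= => <-.
  by rewrite -iz pr_orth.
- have := f_equal (pr 2 1) ez; rewrite pr_piq /= => <-.
  by rewrite iz.
Qed.

Lemma F5 (b : C 2) : pr 2 0 b = 0 -> pr 2 1 b = 0 -> inC 2 b.
Proof.
move=> h0 h1; apply: pr_ext => p; case: p => [|[|[|//]]] _.
- by rewrite pr_orth.
- by rewrite pr_orth.
- by rewrite pr_id.
Qed.

Lemma F6 (b : C 2) : inC 2 b -> pr 2 0 b = 0 /\ pr 2 1 b = 0.
Proof. by move=> ib; split; apply: (inC_orth ib). Qed.

Lemma piq22 (x : C 2) : piq 2 x = pr 2 0 x.
Proof.
apply: pr_ext => p; rewrite pr_piq; case: p => [|[|[|//]]] _ /=.
- by rewrite pr_id.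
- by rewrite pr_orth.
- by rewrite pr_orth.
Qed.
Lemma piq12 (x : C 2) : piq 1 x = pr 2 0 x + pr 2 1 x.
Proof.
apply: pr_ext => p; rewrite pr_piq linearD; case: p => [|[|[|//]]] _ /=.
- by rewrite pr_id pr_orth ?addr0.
- by rewrite pr_id pr_orth ?add0r.
- by rewrite !pr_orth ?addr0.
Qed.

Lemma BN_zero j k : BN j (0 : C k.+1).
Proof.
exists 0; split; last exact: dtot0.
rewrite /NqIn; case: ifP => _ //; split; rewrite /inC ?linear0 //.
Qed.

Lemma G1 (z : C 2) : Zc z -> @calZ R X 2 2 (pr 2 0 z).
Proof.
move=> ez; exists z; split; last by rewrite piq22.
- by move=> i _; rewrite ez linear0; apply: BN_zero.
- by rewrite ez piq0.
Qed.

Lemma G2 (z3 : C 2) : @calZ R X 2 2 z3 -> exists z, Zc z /\ pr 2 0 z = z3.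
Proof.
move=> [eta [hM hp ->]].
have [y1 [N1 e1]] := hM 2%N isT; have [y2 [N2 e2]] := hM 3%N isT.
rewrite /NqIn /= in N1 N2; case: N1 => i1 _ _; case: N2 => i2 _ _.
have h q : (q <= 1)%N -> pr 3 q (dtot eta) = 0.
  move=> q1; have := f_equal (pr 3 q) hp; rewrite pr_piq linear0.
  by rewrite (_ : (2 + q <= 3)%N) //; rewrite -(leq_add2l 2) in q1.
exists (eta - y1 - y2); split.
- rewrite /Zc !dtotB e1 e2; apply: pr_ext => p _; rewrite !linearB linear0.
  case: p => [|[|[|[|p]]]] /=.
  + by rewrite (h 0%N) // !pr_orth // !subr0.
  + by rewrite (h 1%N) // !pr_orth // !subr0.
  + by rewrite pr_id pr_orth // subrr subr0.
  + by rewrite pr_id pr_orth // subr0 subrr.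
  + by rewrite !(@bpr_out _ X 3 p.+4) // !subr0.
- have i1' : inC 1 y1 := i1.
  have i2' : inC 2 y2 := i2.
  rewrite (linearB (bpr X 2 0)) (linearB (bpr X 2 0)).
  by rewrite (inC_orth i1') // (inC_orth i2') // !subr0 piq22.
Qed.

Lemma G3 (k : C 2) : Zc k -> pr 2 0 k = 0 -> ker_rho (pr 2 1 k).
Proof.
move=> ez h0; split.
  split => //; last exact: pr_id.
  by exists k; split; [rewrite ez piq0 | rewrite piq12 h0 add0r].
exists k; split.
- by rewrite piq12 h0 add0r.
- by rewrite ez piq0.
- have er : rho_rep (pr 2 1 k) k = pr 3 3 (dtot k).
    rewrite /rho_rep pr_dtot /= pr_id (bpr_out k (_ : (2 < 3)%N)) //.
    by rewrite linear0 addr0.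
  by rewrite er ez linear0; apply: BN_zero.
Qed.

Lemma G4 (z2 : C 2) : ker_rho z2 -> exists k, [/\ Zc k, pr 2 0 k = 0 & pr 2 1 k = z2].
Proof.
move=> [[_ _ iz] [eta [e1 e2 [y [Ny ey]]]]].
rewrite /NqIn /= in Ny; case: Ny => iy _ _.
have iz' : inC 1 z2 by [].
have er : rho_rep z2 eta = pr 3 3 (dtot eta).
  have o : pr 2 3 eta = 0 by rewrite bpr_out.
  rewrite /rho_rep pr_dtot /= o linear0 addr0 -e1 pr_piq /=.
  by [].
have h q : (q <= 2)%N -> pr 3 q (dtot eta) = 0.
  move=> q1; have := f_equal (pr 3 q) e2; rewrite pr_piq linear0.
  by rewrite (_ : (1 + q <= 3)%N) //; rewrite -(leq_add2l 1) in q1.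
exists (eta - y); split.
- rewrite /Zc dtotB ey er; apply: pr_ext => p _; rewrite !linearB linear0.
  case: p => [|[|[|[|p]]]] /=.
  + by rewrite (h 0%N) // pr_orth // subr0.
  + by rewrite (h 1%N) // pr_orth // subr0.
  + by rewrite (h 2%N) // pr_orth // subr0.
  + by rewrite pr_id subrr.
  + by rewrite !(@bpr_out _ X 3 p.+4) // subr0.
- rewrite linearB (inC_orth iy) // subr0.
  have := f_equal (pr 2 0) e1; rewrite pr_piq /= => ->.
  by rewrite (inC_orth iz').
- rewrite linearB (inC_orth iy) // subr0.
  by have := f_equal (pr 2 1) e1; rewrite pr_piq /= => ->.
Qed.

Lemma G5 (k : C 2) : Zc k -> pr 2 0 k = 0 -> pr 2 1 k = 0 -> ZN0 k.
Proof.
move=> ez h0 h1; have ik := F5 h0 h1; split => //.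
rewrite /NqIn /=; split => //.
- have := f_equal (pr 3 2) ez; rewrite pr_dtot /= h0 h1 !linear0 !add0r ik.
  by [].
- by rewrite -ik -bd21_deg bpr_out.
Qed.

Lemma G6 (z : C 2) : ZN0 z -> exists k, [/\ Zc k, pr 2 0 k = 0, pr 2 1 k = 0 & k = z].
Proof.
move=> [Nz ez]; rewrite /NqIn /= in Nz; case: Nz => iz _ _.
by have [h0 h1] := F6 iz; exists z.
Qed.

Lemma glin_pr k p : glin (pr k p).
Proof. by move=> a x y; rewrite linearP. Qed.
Lemma glin_id k : glin (fun x : C k => x).
Proof. by []. Qed.
Lemma subsp_zero k : subsp (@zerop R (C k)).
Proof. by split => // a x y -> ->; rewrite scaler0 addr0. Qed.
Lemma subsp_Bc : subsp (@Bc R X 1).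
Proof.
split; first by exists 0; rewrite dtot0.
by move=> a _ _ [x <-] [y <-]; exists (a *: x + y); rewrite dtotP.
Qed.
Lemma subsp_Zc : subsp (@Zc R X 2).
Proof. by split; [exact: dtot0 | move=> a x y ex ey; rewrite /Zc dtotP ex ey scaler0 addr0]. Qed.
Lemma Bc_Zc (x : C 2) : Bc x -> Zc x.
Proof. by move=> [y <-]; apply: (bdd y). Qed.
Lemma subsp_inC k p : subsp (@inC R X k p).
Proof. by split; [rewrite /inC linear0 | move=> a x y ex ey; rewrite /inC linearP ex ey]. Qed.
Lemma subspI (V : lmodType R) (S T : V -> Prop) : subsp S -> subsp T -> subsp (fun x => S x /\ T x).
Proof.
move=> [S0 hS] [T0 hT]; split => //.
by move=> a x y [Sx Tx] [Sy Ty]; split; [exact: hS | exact: hT].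
Qed.
Lemma subsp_calB : subsp (@calB R X 1 1).
Proof.
split; first by exists 0; rewrite dtot0 piq0.
by move=> a _ _ [x ->] [y ->]; exists (a *: x + y); rewrite dtotP piqP.
Qed.
Lemma subsp_B0 : subsp (@B0 R X 1).
Proof.
split; first by exists 0; split; [rewrite /inC linear0 | rewrite linear0].
move=> a _ _ [x [ix <-]] [y [iy <-]]; exists (a *: x + y); split; last by rewrite linearP.
by rewrite /inC linearP ix iy.
Qed.

End Bi.

End Helpers.
Import Helpers.
Import GRing.Theory.

Theorem corollary5p6 (R : fieldType) (X : bicomplex R) :
  (* B^2 ~= (B^2 /\ C^{2,0}) (+) (\mathcal{B}^2_1 /\ C^{1,1}) (+) B^2(C^{0,.}, d01) *)
  subq_iso3 (@Bc R X 1) (@zerop R (bC X 2))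
    (fun x => Bc x /\ inC 2 x) (@zerop R (bC X 2))
    (fun x => calB 1 x /\ inC 1 x) (@zerop R (bC X 2))
    (@B0 R X 1) (@zerop R (bC X 2)) /\
  (* Z^2 ~= Z^2(N_0) (+) ker(varrho_2) (+) \mathcal{Z}^2_2 *)
  subq_iso3 (@Zc R X 2) (@zerop R (bC X 2))
    (@ZN0 R X 2) (@zerop R (bC X 2))
    (@ker_rho R X 2) (@zerop R (bC X 2))
    (fun x => @calZ R X 2 2 x) (@zerop R (bC X 2)) /\
  (* H^2 = Z^2/B^2 ~= Z^2(N_0)/(B^2 /\ C^{2,0}) (+) ker(varrho_2)/(\mathcal{B}^2_1 /\ C^{1,1})
                       (+) \mathcal{Z}^2_2 / B^2(C^{0,.}, d01) *)
  subq_iso3 (@Zc R X 2) (@Bc R X 1)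
    (@ZN0 R X 2) (fun x => Bc x /\ inC 2 x)
    (@ker_rho R X 2) (fun x => calB 1 x /\ inC 1 x)
    (fun x => @calZ R X 2 2 x) (@B0 R X 1).
Proof.
have hB1 := subspI (@subsp_Bc R X) (@subsp_inC R X 2 2).
have hB2 := subspI (@subsp_calB R X) (@subsp_inC R X 2 1).
have z0 := @subsp_zero R X 2.
have l1 := @glin_id R X 2.
have l2 := @glin_pr R X 2 1.
have l3 := @glin_pr R X 2 0.
split; last split.
- apply: (abstract_iso (@subsp_Bc R X) z0 _ z0 z0 z0 l1 l2 l3).
  + by move=> x ->; exists 0; rewrite dtot0.
  + exact: F1.
  + by move=> b ->; rewrite /zerop linear0.
  + exact: F2.
  + by move=> z _ ez; exists 0; split => //; rewrite linear0 ez.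
  + exact: F3.
  + by move=> b -> _; rewrite /zerop linear0.
  + exact: F4.
  + by move=> k _ _ ek; exists 0; split; rewrite // linear0.
  + by move=> k Bk h0 h1; split => //; exact: F5.
  + by [].
  + by move=> z1 [Bz iz]; have [h0 h1] := F6 iz; exists z1.
  + by [].
- apply: (abstract_iso (@subsp_Zc R X) z0 _ z0 z0 z0 l1 l2 l3).
  + by move=> x ->; rewrite /Zc dtot0.
  + exact: G1.
  + by move=> b ->; rewrite /zerop linear0.
  + exact: G2.
  + by move=> z _ ez; exists 0; split => //; rewrite linear0 ez.
  + exact: G3.
  + by move=> b -> _; rewrite /zerop linear0.
  + exact: G4.
  + by move=> k _ _ ek; exists 0; split; rewrite // linear0.
  + exact: G5.
  + by [].
  + exact: G6.
  + by [].
- apply: (abstract_iso (@subsp_Zc R X) (@subsp_Bc R X) (@Bc_Zc R X) hB1 hB2 (@subsp_B0 R X) l1 l2 l3).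
  + exact: G1.
  + exact: F1.
  + exact: G2.
  + by move=> z _ /F2 [b [Bb eb]]; exists b.
  + exact: G3.
  + exact: F3.
  + exact: G4.
  + by move=> k _ _ /F4 [b [Bb h0 h1]]; exists b.
  + exact: G5.
  + by move=> b Bb h0 h1; split => //; exact: F5.
  + exact: G6.
  + by move=> k _ _ _ [].
Qed.
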